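(* Let $H$ be a complex separable Hilbert space and let $S,T\in B(H)$ be normal Hilbert–Schmidt operators such that the product $ST$ is normal. Then $\|ST\|_2\le\|TS\|_2$.
   Context: $\|\cdot\|_2$ denotes the Hilbert–Schmidt norm, $\|Z\|_2=(\operatorname{tr}(Z^*Z))^{1/2}$, and $S,T$ belong to the Hilbert–Schmidt class (the norm ideal associated with $\|\cdot\|_2$). *)

(* Defs.v *)
From HB Require Import structures.
From mathcomp Require Import all_boot all_order all_algebra.
From mathcomp Require Import all_classical all_reals all_analysis.
From mathcomp Require Import complex.
Set Implicit Arguments. Unset Strict Implicit. Unset Printing Implicit Defensive.
Import Order.TTheory GRing.Theory Num.Theory.
Local Open Scope ring_scope.
Local Open Scope classical_set_scope.

(* A complex separable Hilbert space is (unitarily isomorphic to) l^2(A) for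
   some index set A ⊆ nat (A = {0,..,n-1} or A = nat).  An operator on l^2(A)
   is encoded by its matrix (a i j) = <a e_j, e_i> w.r.t. the standard basis,
   extended by 0 outside A × A. *)
Definition cmx (R : realType) := nat -> nat -> R[i].

Definition supported_on (R : realType) (A : set nat) (a : cmx R) : Prop :=
  forall i j, ~ (A i /\ A j) -> a i j = 0.

Definition csq (R : realType) (z : R[i]) : R := (complex.Re z) ^+ 2 + (complex.Im z) ^+ 2.

Definition hs_norm2 (R : realType) (a : cmx R) : \bar R :=
  \esum_(ij in [set: nat * nat]) (csq (a ij.1 ij.2))%:E.

Definition hilbert_schmidt (R : realType) (a : cmx R) : Prop :=
  (hs_norm2 a < +oo)%E.

Definition hs_norm (R : realType) (a : cmx R) : R := Num.sqrt (fine (hs_norm2 a)).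

Definition cadj (R : realType) (a : cmx R) : cmx R := fun i j => conjc (a j i).

(* operator product: (ab)_ij = sum_k a_ik b_kj, a series (absolutely convergent
   for Hilbert–Schmidt a, b), computed via its real and imaginary parts *)
Definition cmul (R : realType) (a b : cmx R) : cmx R := fun i j =>
  Complex (limn (fun n => \sum_(0 <= k < n) complex.Re (a i k * b k j)))
          (limn (fun n => \sum_(0 <= k < n) complex.Im (a i k * b k j))).

Definition normal_op (R : realType) (a : cmx R) : Prop :=
  cmul (cadj a) a = cmul a (cadj a).

(* Main.v *)
Require Import Defs.
From HB Require Import structures.
From mathcomp Require Import all_boot all_order all_algebra.
From mathcomp Require Import all_classical all_reals all_analysis.
From mathcomp Require Import complex.
From mathcomp Require Import ring lra.
Import Order.TTheory GRing.Theory Num.Theory.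
Import numFieldNormedType.Exports.
Local Open Scope classical_set_scope.
Local Open Scope ring_scope.
Set Implicit Arguments. Unset Strict Implicit. Unset Printing Implicit Defensive.

Section Aux.
Variable R : realType.
Implicit Types (z w : R[i]).

Lemma ReD z w : complex.Re (z + w) = complex.Re z + complex.Re w.
Proof. by case: z; case: w. Qed.
Lemma ImD z w : complex.Im (z + w) = complex.Im z + complex.Im w.
Proof. by case: z; case: w. Qed.
Lemma ReM z w : complex.Re (z * w) = complex.Re z * complex.Re w - complex.Im z * complex.Im w.
Proof. by case: z; case: w. Qed.
Lemma ImM z w : complex.Im (z * w) = complex.Re z * complex.Im w + complex.Im z * complex.Re w.
Proof. by case: z => a b; case: w => c d /=; rewrite addrC. Qed.
Lemma ReJ z : complex.Re (conjc z) = complex.Re z.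
Proof. by case: z. Qed.
Lemma ImJ z : complex.Im (conjc z) = - complex.Im z.
Proof. by case: z. Qed.
Lemma Re0 : complex.Re (0 : R[i]) = 0. Proof. by []. Qed.
Lemma Im0 : complex.Im (0 : R[i]) = 0. Proof. by []. Qed.

Lemma Re_sum (I : Type) (r : seq I) (P : pred I) (F : I -> R[i]) :
  complex.Re (\sum_(i <- r | P i) F i) = \sum_(i <- r | P i) complex.Re (F i).
Proof. by elim/big_rec2: _ => // i y1 y2 _ <-; rewrite ReD. Qed.
Lemma Im_sum (I : Type) (r : seq I) (P : pred I) (F : I -> R[i]) :
  complex.Im (\sum_(i <- r | P i) F i) = \sum_(i <- r | P i) complex.Im (F i).
Proof. by elim/big_rec2: _ => // i y1 y2 _ <-; rewrite ImD. Qed.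

Lemma csq_ge0 z : 0 <= csq z.
Proof. by rewrite /csq addr_ge0 // sqr_ge0. Qed.
Lemma csqJ z : csq (conjc z) = csq z.
Proof. by rewrite /csq ReJ ImJ sqrrN. Qed.

Lemma absReM z w : `|complex.Re (z * w)| <= (csq z + csq w) / 2.
Proof.
rewrite ReM /csq; case: z => a b; case: w => c d /=.
have h1 := sqr_ge0 (a - c); have h2 := sqr_ge0 (b + d).
have h3 := sqr_ge0 (a + c); have h4 := sqr_ge0 (b - d).
rewrite ler_norml; apply/andP; split; nra.
Qed.
Lemma absImM z w : `|complex.Im (z * w)| <= (csq z + csq w) / 2.
Proof.
rewrite ImM /csq; case: z => a b; case: w => c d /=.
have h1 := sqr_ge0 (a - d); have h2 := sqr_ge0 (b - c).
have h3 := sqr_ge0 (a + d); have h4 := sqr_ge0 (b + c).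
rewrite ler_norml; apply/andP; split; nra.
Qed.

End Aux.


Section L2.
Variable R : realType.
Implicit Types (x y a b : nat -> R[i]).

Definition nrm2 x : \bar R := (\sum_(k <oo) (csq (x k))%:E)%E.
Definition l2 x := (nrm2 x < +oo)%E.

Lemma nrm2_ge0 x : (0 <= nrm2 x)%E.
Proof. by apply: nneseries_ge0 => k _ _; rewrite lee_fin csq_ge0. Qed.

Lemma l2_cvg x : l2 x -> cvgn (series (fun k => csq (x k))).
Proof. by move=> h; apply: nnseries_is_cvg => // k; exact: csq_ge0. Qed.

Lemma nrm2E x : l2 x -> nrm2 x = (limn (series (fun k => csq (x k))))%:E.
Proof.
move=> h; rewrite -EFin_lim; last exact: l2_cvg.
by rewrite /nrm2; apply/congr_lim/funext => n /=; rewrite sumEFin.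
Qed.

Lemma series_cvg_abs (u v : nat -> R) : (forall k, `|u k| <= v k) ->
  cvgn (series v) -> cvgn (series u).
Proof.
move=> uv cv; apply: normed_cvg; apply: (series_le_cvg _ _ uv cv) => // k.
exact: le_trans (uv k).
Qed.

Lemma cvg_half_sum a b : l2 a -> l2 b ->
  cvgn (series (fun k => (csq (a k) + csq (b k)) / 2)).
Proof.
move=> ha hb.
have -> : series (fun k => (csq (a k) + csq (b k)) / 2) =
  (fun n => (series (fun k => csq (a k)) n + series (fun k => csq (b k)) n) / 2).
  apply/funext => n; rewrite /series /= -mulr_suml big_split //.
apply: is_cvgMr_tmp; apply: is_cvgD; exact: l2_cvg.
Qed.

Lemma l2_Re_cvg a b : l2 a -> l2 b -> cvgn (series (fun k => complex.Re (a k * b k))).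
Proof.
move=> ha hb; apply: (series_cvg_abs _ (cvg_half_sum ha hb)) => k; exact: absReM.
Qed.
Lemma l2_Im_cvg a b : l2 a -> l2 b -> cvgn (series (fun k => complex.Im (a k * b k))).
Proof.
move=> ha hb; apply: (series_cvg_abs _ (cvg_half_sum ha hb)) => k; exact: absImM.
Qed.

Lemma l2J x : l2 x -> l2 (fun k => conjc (x k)).
Proof.
rewrite /l2 /nrm2 => h; apply: le_lt_trans h; rewrite le_eqVlt; apply/orP; left.
by apply/eqP/congr_lim/funext => n; apply: eq_bigr => k _; rewrite csqJ.
Qed.

End L2.


Section HS.
Variable R : realType.
Implicit Types (a : cmx R).

Lemma hs_rows a : hs_norm2 a = (\sum_(i <oo) nrm2 (fun k => a i k))%E.
Proof.
rewrite /hs_norm2 /nrm2.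
have -> : [set: nat * nat] = [set: nat] `*`` (fun _ => [set: nat]).
  by apply/seteqP; split => -[i j] //=.
rewrite -(esum_esum (a := fun i j => (csq (a i j))%:E)); last by move=> i j _ _; rewrite lee_fin csq_ge0.
rewrite nneseries_esumT; last by move=> i; apply: nneseries_ge0 => k _ _; rewrite lee_fin csq_ge0.
apply: eq_esum => i _; rewrite nneseries_esumT //.
by move=> k; rewrite lee_fin csq_ge0.
Qed.

Definition tr a : cmx R := fun i j => a j i.

Lemma hs_tr a : hs_norm2 (tr a) = hs_norm2 a.
Proof.
rewrite /hs_norm2 (@reindex_esum _ _ _ [set: nat * nat] [set: nat * nat] (fun ij => (ij.2, ij.1))) //.
split => //.
- by move=> [i j] [k l] _ _ /= [-> ->].
- by move=> -[i j] _; exists (j, i).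
Qed.

Lemma hs_cols a : hs_norm2 a = (\sum_(j <oo) nrm2 (fun i => a i j))%E.
Proof. by rewrite -hs_tr hs_rows. Qed.

Lemma le_nneseries_term (u : nat -> \bar R) i : (forall k, (0 <= u k)%E) ->
  (u i <= \sum_(k <oo) u k)%E.
Proof.
move=> u0; apply: le_trans (nneseries_lim_ge i.+1 (fun n _ _ => u0 n)).
by rewrite big_nat_recr //= leeDr // sume_ge0.
Qed.

Lemma hs_row_l2 a i : hilbert_schmidt a -> l2 (fun k => a i k).
Proof.
rewrite /hilbert_schmidt hs_rows => h; apply: le_lt_trans h.
by apply: le_nneseries_term => k; exact: nrm2_ge0.
Qed.

Lemma hs_col_l2 a j : hilbert_schmidt a -> l2 (fun i => a i j).
Proof.
rewrite /hilbert_schmidt hs_cols => h; apply: le_lt_trans h.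
by apply: le_nneseries_term => k; exact: nrm2_ge0.
Qed.

End HS.


Section Fin.
Variable R : realType.
Implicit Types (z w : R[i]).

Lemma csq_sum (r : seq nat) (u : nat -> R[i]) :
  csq (\sum_(k <- r) u k) = \sum_(k <- r) \sum_(l <- r)
     (complex.Re (u k) * complex.Re (u l) + complex.Im (u k) * complex.Im (u l)).
Proof.
rewrite /csq Re_sum Im_sum !expr2 !mulr_suml -big_split /=; apply: eq_bigr => k _.
by rewrite !mulr_sumr -big_split.
Qed.

Lemma key_id (u v p q : R[i]) :
  complex.Re (u * p) * complex.Re (v * q) + complex.Im (u * p) * complex.Im (v * q) =
  complex.Re (p * conjc q) * complex.Re (conjc v * u) -
  complex.Im (p * conjc q) * complex.Im (conjc v * u).
Proof.
case: u => a b; case: v => c d; case: p => e f; case: q => g h /=; ring.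
Qed.

Lemma cs_pt z1 w1 z2 w2 :
  2 * (complex.Re (z1 * w1) * complex.Re (z2 * w2) + complex.Im (z1 * w1) * complex.Im (z2 * w2))
  <= csq z1 * csq w2 + csq z2 * csq w1.
Proof.
have h := csq_ge0 (z1 * conjc w2 - z2 * conjc w1).
move: h; rewrite /csq.
case: z1 => a b; case: w1 => c d; case: z2 => e f; case: w2 => g h /=.
move=> H; nra.
Qed.

Lemma cs_fin (r : seq nat) (z w : nat -> R[i]) :
  csq (\sum_(k <- r) z k * w k) <= (\sum_(k <- r) csq (z k)) * (\sum_(k <- r) csq (w k)).
Proof.
set A := \sum_(k <- r) csq (z k); set B := \sum_(k <- r) csq (w k).
have E1 : A * B = \sum_(k <- r) \sum_(l <- r) csq (z k) * csq (w l).
  by rewrite mulr_suml; apply: eq_bigr => k _; rewrite mulr_sumr.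
have E2 : A * B = \sum_(k <- r) \sum_(l <- r) csq (z l) * csq (w k).
  by rewrite exchange_big /= E1.
have H : 2 * csq (\sum_(k <- r) z k * w k) <= A * B + A * B.
  rewrite csq_sum mulr_sumr {1}E1 E2 -big_split /=; apply: ler_sum => k _.
  rewrite mulr_sumr -big_split /=; apply: ler_sum => l _; exact: cs_pt.
lra.
Qed.
End Fin.


Section Lim.
Variable R : realType.

Lemma cvg_sum_seq (I : Type) (r : seq I) (F : I -> nat -> R) (L : I -> R) :
  (forall k, F k n @[n --> \oo] --> L k) ->
  \sum_(k <- r) F k n @[n --> \oo] --> \sum_(k <- r) L k.
Proof.
move=> h; elim: r => [|k r IH].
  rewrite big_nil; under eq_cvg do rewrite big_nil; exact: cvg_cst.
rewrite big_cons; under eq_cvg do rewrite big_cons.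
exact: cvgD.
Qed.

Lemma dct (f : nat -> nat -> R) (g F : nat -> R) :
  (forall n i, 0 <= f n i) -> (forall n i, f n i <= g i) ->
  (forall i, f n i @[n --> \oo] --> F i) ->
  (\sum_(i <oo) (g i)%:E < +oo)%E ->
  (\sum_(i <oo) (f n i)%:E)%E @[n --> \oo] --> (\sum_(i <oo) (F i)%:E)%E.
Proof.
move=> f0 fg fF gfin.
have F0 i : 0 <= F i.
  rewrite -(cvg_lim _ (fF i)) //; apply: limr_ge; first by apply/cvg_ex; exists (F i); exact: fF.
  by apply: nearW => n.
have g0 i : 0 <= g i by apply: le_trans (fg 0%N i).
have H : (\int[counting]_(i in [set: nat]) (f n i)%:E)%E @[n --> \oo] -->
   (\int[counting]_(i in [set: nat]) (F i)%:E)%E.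
  apply: (@dominated_cvg _ _ _ _ _ _ _ _ (fun i => (g i)%:E)) => //.
  - by move=> i _; apply/fine_cvgP; split; [exact: nearW | exact: fF].
  - apply/integrableP; split => //.
    under eq_integral do rewrite gee0_abs ?lee_fin //.
    by rewrite ge0_integral_count // => i; rewrite lee_fin.
  - by move=> n i _; rewrite gee0_abs ?lee_fin.
have E1 : (fun n => (\int[counting]_(i in [set: nat]) (f n i)%:E)%E) =
    (fun n => (\sum_(i <oo) (f n i)%:E)%E).
  by apply/funext => n; rewrite ge0_integral_count // => i; rewrite lee_fin.
have E2 : (\int[counting]_(i in [set: nat]) (F i)%:E)%E = (\sum_(i <oo) (F i)%:E)%E.
  by rewrite ge0_integral_count // => i; rewrite lee_fin.
by rewrite E1 E2 in H.
Qed.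

End Lim.


Section Core.
Variable R : realType.
Implicit Types (a u : cmx R) (x : nat -> R[i]).

Definition mv a x (i : nat) : R[i] :=
  Complex (limn (fun n => \sum_(0 <= k < n) complex.Re (a i k * x k)))
          (limn (fun n => \sum_(0 <= k < n) complex.Im (a i k * x k))).

Definition yN a x N i := \sum_(0 <= k < N) a i k * x k.

Lemma nrm2_fin x : l2 x -> nrm2 x \is a fin_num.
Proof. by move=> h; rewrite ge0_fin_numE //; exact: nrm2_ge0. Qed.

Lemma psum_le x N : l2 x -> \sum_(0 <= k < N) csq (x k) <= fine (nrm2 x).
Proof.
move=> h; rewrite -lee_fin fineK; last exact: nrm2_fin.
rewrite -sumEFin; apply: nneseries_lim_ge => k _ _; rewrite lee_fin; exact: csq_ge0.
Qed.

Lemma yN_cvg a x i : l2 (fun k => a i k) -> l2 x ->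
  csq (yN a x N i) @[N --> \oo] --> csq (mv a x i).
Proof.
move=> ha hx; rewrite /csq /yN /=.
have -> : (fun N => complex.Re (\sum_(0 <= k < N) a i k * x k) ^+ 2 +
  complex.Im (\sum_(0 <= k < N) a i k * x k) ^+ 2) =
  (fun N => (\sum_(0 <= k < N) complex.Re (a i k * x k)) * (\sum_(0 <= k < N) complex.Re (a i k * x k)) +
  (\sum_(0 <= k < N) complex.Im (a i k * x k)) * (\sum_(0 <= k < N) complex.Im (a i k * x k))).
  by apply/funext => N; rewrite Re_sum Im_sum !expr2.
rewrite !expr2.
have h1 := l2_Re_cvg ha hx; have h2 := l2_Im_cvg ha hx.
by apply: (cvgD (cvgM h1 h1) (cvgM h2 h2)).
Qed.

Lemma yN_bound a x N i : l2 (fun k => a i k) -> l2 x ->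
  csq (yN a x N i) <= fine (nrm2 (fun k => a i k)) * fine (nrm2 x).
Proof.
move=> ha hx; apply: le_trans (cs_fin _ _ _) _.
apply: ler_pM; [apply: sumr_ge0 => k _; exact: csq_ge0|apply: sumr_ge0 => k _; exact: csq_ge0| |].
- exact: (psum_le N ha).
- exact: psum_le.
Qed.


Lemma core_lim a x : hilbert_schmidt a -> l2 x ->
  (\sum_(i <oo) (csq (yN a x N i))%:E)%E @[N --> \oo] --> nrm2 (mv a x).
Proof.
move=> ha hx; rewrite /nrm2.
apply: (dct (g := fun i => fine (nrm2 (fun k => a i k)) * fine (nrm2 x))).
- by move=> n i; exact: csq_ge0.
- by move=> n i; apply: yN_bound => //; exact: hs_row_l2.
- by move=> i; apply: yN_cvg => //; exact: hs_row_l2.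
- rewrite (@eq_eseriesr _ _ (fun i => ((fine (nrm2 x))%:E * nrm2 (fun k => a i k))%E)); last first.
    by move=> i _; rewrite mulrC EFinM (fineK (nrm2_fin (hs_row_l2 i ha))).
  rewrite nneseriesZl; last by move=> i _; exact: nrm2_ge0.
  rewrite -hs_rows.
  have hf : hs_norm2 a \is a fin_num.
    by rewrite ge0_fin_numE //; apply: esum_ge0 => ij _; rewrite lee_fin csq_ge0.
  by rewrite -(fineK hf) -EFinM ltry.
Qed.


Definition Qf u x N := \sum_(0 <= k < N) \sum_(0 <= l < N)
  (complex.Re (x k * conjc (x l)) * complex.Re (cmul (cadj u) u l k) -
   complex.Im (x k * conjc (x l)) * complex.Im (cmul (cadj u) u l k)).

Lemma expand u x N : (forall k, l2 (fun i => u i k)) ->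
  (\sum_(i <oo) (csq (yN u x N i))%:E)%E = (Qf u x N)%:E.
Proof.
move=> hu.
have term i : csq (yN u x N i) = \sum_(0 <= k < N) \sum_(0 <= l < N)
   (complex.Re (x k * conjc (x l)) * complex.Re (conjc (u i l) * u i k) -
    complex.Im (x k * conjc (x l)) * complex.Im (conjc (u i l) * u i k)).
  by rewrite /yN csq_sum; apply: eq_bigr => k _; apply: eq_bigr => l _; exact: key_id.
have ps n : \sum_(0 <= i < n) csq (yN u x N i) = \sum_(0 <= k < N) \sum_(0 <= l < N)
   (complex.Re (x k * conjc (x l)) * (\sum_(0 <= i < n) complex.Re (conjc (u i l) * u i k)) -
    complex.Im (x k * conjc (x l)) * (\sum_(0 <= i < n) complex.Im (conjc (u i l) * u i k))).
  under eq_bigr do rewrite term.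
  rewrite exchange_big; apply: eq_bigr => k _.
  rewrite exchange_big; apply: eq_bigr => l _.
  by rewrite sumrB !mulr_sumr.
have cv : (fun n => \sum_(0 <= i < n) csq (yN u x N i)) @ \oo --> Qf u x N.
  rewrite (funext ps) /Qf.
  apply: cvg_sum_seq => k; apply: cvg_sum_seq => l.
  have h1 := l2_Re_cvg (l2J (hu l)) (hu k).
  have h2 := l2_Im_cvg (l2J (hu l)) (hu k).
  by apply: cvgB; apply: cvgMr; [exact: h1 | exact: h2].
apply: cvg_lim => //.
apply/fine_cvgP; split; first by apply: nearW => n; rewrite sumEFin.
have -> : fine \o (fun n : nat => \sum_(0 <= i < n) (csq (yN u x N i))%:E) =
  (fun n => \sum_(0 <= i < n) csq (yN u x N i)).
  by apply/funext => n /=; rewrite sumEFin.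
exact: cv.
Qed.


Lemma cadjK a : cadj (cadj a) = a.
Proof. by apply/funext => i; apply/funext => j; rewrite /cadj conjcK. Qed.

Lemma hs_cadj a : hs_norm2 (cadj a) = hs_norm2 a.
Proof.
have -> : cadj a = tr (fun i j => conjc (a i j)) by [].
rewrite hs_tr /hs_norm2; apply: eq_esum => ij _; by rewrite csqJ.
Qed.

Lemma core S x : hilbert_schmidt S -> normal_op S -> l2 x ->
  nrm2 (mv S x) = nrm2 (mv (cadj S) x).
Proof.
move=> hS hN hx.
have hS' : hilbert_schmidt (cadj S) by rewrite /hilbert_schmidt hs_cadj.
rewrite -(cvg_lim _ (core_lim hS hx)) // -(cvg_lim _ (core_lim hS' hx)) //.
have -> // : (fun N => (\sum_(i <oo) (csq (yN S x N i))%:E)%E) =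
    (fun N => (\sum_(i <oo) (csq (yN (cadj S) x N i))%:E)%E).
apply/funext => N.
rewrite (expand _ _ (fun k => hs_col_l2 k hS)) (expand _ _ (fun k => hs_col_l2 k hS')).
by rewrite /Qf cadjK hN.
Qed.

End Core.

Section Fin2.
Variable R : realType.
Implicit Types (a b S T : cmx R).

Lemma hs_mul_cols a b : hs_norm2 (cmul a b) = (\sum_(j <oo) nrm2 (mv a (fun k => b k j)))%E.
Proof. by rewrite hs_cols. Qed.

Lemma normal_swap S T : hilbert_schmidt S -> hilbert_schmidt T -> normal_op S ->
  hs_norm2 (cmul S T) = hs_norm2 (cmul (cadj S) T).
Proof.
move=> hS hT hN; rewrite !hs_mul_cols; apply: eq_eseriesr => j _.
by apply: core => //; exact: hs_col_l2.
Qed.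

Lemma ReJM (s t : R[i]) : complex.Re (conjc t * s) = complex.Re (conjc s * t).
Proof. by case: s => a b; case: t => c d /=; ring. Qed.
Lemma ImJM (s t : R[i]) : complex.Im (conjc t * s) = - complex.Im (conjc s * t).
Proof. by case: s => a b; case: t => c d /=; ring. Qed.

Lemma adj_swap S T : hilbert_schmidt S -> hilbert_schmidt T ->
  hs_norm2 (cmul (cadj S) T) = hs_norm2 (cmul (cadj T) S).
Proof.
move=> hS hT.
suff -> : cmul (cadj T) S = cadj (cmul (cadj S) T) by rewrite hs_cadj.
apply/funext => i; apply/funext => j; rewrite /cadj /cmul /=.
congr Complex.
  by congr (limn _); apply/funext => n; apply: eq_bigr => k _; rewrite ReJM.
have h := l2_Im_cvg (l2J (hs_col_l2 j hS)) (hs_col_l2 i hT).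
rewrite -(limN h); congr (limn _); apply/funext => n /=.
have -> : (- series (fun k : nat => complex.Im ((S k j)^*%C * T k i))) n = - \sum_(0 <= k < n) complex.Im ((S k j)^*%C * T k i) by [].
by rewrite -sumrN; apply: eq_bigr => k _; exact: ImJM.
Qed.

Lemma hs_swap S T : hilbert_schmidt S -> hilbert_schmidt T ->
  normal_op S -> normal_op T -> hs_norm2 (cmul S T) = hs_norm2 (cmul T S).
Proof.
move=> hS hT nS nT.
by rewrite (normal_swap hS hT nS) (adj_swap hS hT) (normal_swap hT hS nT).
Qed.
End Fin2.

Theorem mainTheorem6 (R : realType) (A : set nat) (S T : cmx R) :
  supported_on A S -> supported_on A T ->
  hilbert_schmidt S -> hilbert_schmidt T ->
  normal_op S -> normal_op T -> normal_op (cmul S T) ->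
  hs_norm (cmul S T) <= hs_norm (cmul T S).
Proof.
move=> _ _ hS hT nS nT _.
by rewrite /hs_norm (hs_swap hS hT nS nT).
Qed.
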